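(* There exists a family of species trees whose number of matching coalescent histories grows faster than exponentially in the number of taxa (leaves) $m$. In particular, for odd $m\ge 1$, the number $h_{(m-1)/2}$ of matching coalescent histories of the lodgepole species tree $\lambda_{(m-1)/2}$ (which has $m$ leaves) satisfies, as $m\to\infty$ through odd values, $$h_{(m-1)/2}\sim m!!\sim\sqrt{2}\left(\sqrt{\frac{m+1}{e}}\right)^{m+1}.$$
   Context: A species tree is a rooted binary tree whose leaves carry distinct labels. Each node $v$ of a tree $t$ has a branch directly above it: for a non-root node this is the edge joining $v$ to its parent, and the root additionally has a root branch above it. A leaf $x$ descends from a branch if $x$ lies in the subtree below that branch. A branch $b'$ is descended from a branch $b$ if the node at the lower end of $b'$ lies in the subtree below $b$. Given a species tree $t$, a matching coalescent history of $t$ is a map $h$ from the set of internal nodes of $t$ to the set of branches of $t$ such that: (a) for every leaf $x$ and internal node $k$, if $x$ descends from $k$ then $x$ descends from the branch $h(k)$; (b) for all internal nodes $k_1,k_2$, if $k_2$ is a descendant of $k_1$ then $h(k_2)$ is descended from or coincides with $h(k_1)$. The lodgepole family $(\lambda_n)_{n\ge0}$: $\lambda_0$ is the one-leaf tree, and $\lambda_{n+1}$ is obtained by attaching $\lambda_n$ and a cherry (a two-leaf tree) as the two child subtrees of a new root; $\lambda_n$ has $2n+1$ leaves. The one-leaf tree $\lambda_0$ is assigned $h_0=1$ history by convention. $m!!=m(m-2)\cdots 3\cdot1$ for odd $m$, and $\sim$ denotes asymptotic equivalence (ratio tends to $1$). *)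

(* Defs.v *)
From mathcomp Require Import all_boot.
Set Implicit Arguments. Unset Strict Implicit. Unset Printing Implicit Defensive.

(* Rooted binary tree shapes.  Leaf labels are distinct and play no role in
   the number of matching coalescent histories, so they are left implicit:
   a leaf is identified by its position. *)
Inductive tree := Leaf | Node of tree & tree.

(* Nodes are addressed by their path from the root (false = left child,
   true = right child).  The branch above node v is identified with v
   (the root branch is the branch above the root [::]). *)
Fixpoint nodes (t : tree) : seq (seq bool) :=
  match t with
  | Leaf => [:: [::]]
  | Node l r => [::] :: (map (cons false) (nodes l) ++ map (cons true) (nodes r))
  end.

Fixpoint leaves (t : tree) : seq (seq bool) :=
  match t with
  | Leaf => [:: [::]]
  | Node l r => map (cons false) (leaves l) ++ map (cons true) (leaves r)
  end.

Fixpoint internals (t : tree) : seq (seq bool) :=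
  match t with
  | Leaf => [::]
  | Node l r => [::] :: (map (cons false) (internals l) ++ map (cons true) (internals r))
  end.

Definition below (p q : seq bool) : bool := prefix p q.

Definition is_history (t : tree) (h : seq bool -> seq bool) : bool :=
  all (fun k => h k \in nodes t) (internals t) &&
  all (fun k => all (fun x => below k x ==> below (h k) x) (leaves t)) (internals t) &&
  all (fun k1 => all (fun k2 => below k1 k2 ==> below (h k1) (h k2)) (internals t))
      (internals t).

(* The number of matching coalescent histories: maps from the (uniq) list of
   internal nodes to the (uniq) list of nodes/branches, encoded by indices. *)
Definition num_histories (t : tree) : nat :=
  #|[set f : {ffun 'I_(size (internals t)) -> 'I_(size (nodes t))} |
     is_history t (fun k => if insub (index k (internals t)) is Some i
                      then nth [::] (nodes t) (f i) else [::])]|.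

Fixpoint lodgepole (n : nat) : tree :=
  match n with
  | 0 => Leaf
  | n'.+1 => Node (lodgepole n') (Node Leaf Leaf)
  end.

Fixpoint dfact (m : nat) : nat :=
  match m with
  | 0 => 1
  | 1 => 1
  | (m'.+1 as k).+1 => m'.+2 * dfact m'
  end.

(* Main.v *)
Require Import Defs.
From mathcomp Require Import all_boot zify.
Set Implicit Arguments. Unset Strict Implicit. Unset Printing Implicit Defensive.

Section Allseq.
Variable T : eqType.

Fixpoint allseq (a : nat) (L : seq T) : seq (seq T) :=
  if a is a'.+1 then [seq x :: s | x <- L, s <- allseq a' L] else [:: [::]].

Lemma mem_allseq a L s : (s \in allseq a L) = (size s == a) && all (mem L) s.
Proof.
elim: a s => [|a IH] [|x s] //=.
- by apply/negbTE/allpairsP => -[[y t] [_ _ /=]].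
- apply/allpairsP/idP => [[[y t] [/= Hy Ht [-> ->]]]|/andP[Hs /andP[Hx Ha]]].
    by move: Ht; rewrite IH eqSS => /andP[-> ->]; rewrite Hy.
  by exists (x, s); split => //=; rewrite IH -eqSS Hs.
Qed.

Lemma allseq_uniq a L : uniq L -> uniq (allseq a L).
Proof.
move=> uL; elim: a => [|a IH] //=.
apply: allpairs_uniq => // -[x s] [y t] _ _ /= [-> ->] //.
Qed.

Lemma count_allseqS P a L :
  count P (allseq a.+1 L) = \sum_(x <- L) count (fun s => P (x :: s)) (allseq a L).
Proof.
rewrite /= /allpairs count_flatten; move: (allseq a L) => S.
elim: L => [|x L IH]; first by rewrite big_nil.
by rewrite big_cons /= count_map IH.
Qed.

Lemma count_allseq_cat P m n L :
  count P (allseq (m + n) L) =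
  \sum_(u <- allseq m L) count (fun v => P (u ++ v)) (allseq n L).
Proof.
elim: m P => [|m IH] P; first by rewrite /= big_cons big_nil addn0.
rewrite addSn count_allseqS /=.
rewrite /allpairs big_flatten /= big_map.
apply: eq_bigr => x _; rewrite IH big_map; apply: eq_bigr => u _ //.
Qed.

End Allseq.

Section Card.
Variable T : eqType.

Lemma card_count (a b : nat) (L : seq T) (d0 : T) (P : pred (seq T)) :
  uniq L -> size L = b ->
  #|[set f : {ffun 'I_a -> 'I_b} | P [seq nth d0 L (f i) | i <- enum 'I_a]]|
  = count P (allseq a L).
Proof.
move=> uL sL.
pose sf (f : {ffun 'I_a -> 'I_b}) := [seq nth d0 L (f i) | i <- enum 'I_a].
have nsf (h : {ffun 'I_a -> 'I_b}) (i : 'I_a) : nth d0 (sf h) i = nth d0 L (h i).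
  by rewrite /sf (nth_map i) ?size_enum_ord // nth_ord_enum.
rewrite -sum1dep_card sum1_count -(count_map sf P).
apply/permP/uniq_perm.
- rewrite map_inj_uniq ?index_enum_uniq // => f g /= E; apply/ffunP => i.
  have := congr1 (fun s => nth d0 s (nat_of_ord i)) E.
  rewrite !nsf; move/eqP; rewrite nth_uniq ?sL ?ltn_ord // => /eqP H; exact: val_inj.
- exact: allseq_uniq.
- move=> s; rewrite mem_allseq; apply/mapP/andP => [[f _ ->]|[/eqP Hs /allP HL]].
    rewrite /sf size_map size_enum_ord; split => //; apply/allP => x /mapP[i _ ->].
    by apply: mem_nth; rewrite sL ltn_ord.
  have Hi (i : 'I_a) : index (nth d0 s i) L < b.
    by rewrite -sL index_mem; apply: HL; apply: mem_nth; rewrite Hs.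
  exists [ffun i => Ordinal (Hi i)]; first by rewrite mem_index_enum.
  apply: (@eq_from_nth _ d0); first by rewrite size_map size_enum_ord.
  move=> j; rewrite Hs => Hj.
  rewrite /sf (nth_map (Ordinal Hj)) ?size_enum_ord //.
  have -> : nth (Ordinal Hj) (enum 'I_a) j = Ordinal Hj.
    by apply: val_inj; rewrite /= nth_enum_ord.
  by rewrite ffunE /= nth_index //; apply: HL; apply: mem_nth; rewrite Hs.
Qed.
End Card.

Definition hs (I : seq (seq bool)) (s : seq (seq bool)) (k : seq bool) : seq bool :=
  if index k I < size I then nth [::] s (index k I) else [::].

Lemma is_history_ext t h1 h2 : (forall k, h1 k = h2 k) ->
  is_history t h1 = is_history t h2.
Proof.
move=> E; rewrite /is_history.
have E2 : forall k, h1 k = h2 k by [].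
by congr (_ && _ && _); apply: eq_all => k; rewrite E //;
   apply: eq_all => k2; rewrite E.
Qed.

Lemma num_histories_count t :
  uniq (nodes t) ->
  num_histories t = count (fun s => is_history t (hs (internals t) s))
                          (allseq (size (internals t)) (nodes t)).
Proof.
move=> uN; rewrite /num_histories -(@card_count _ _ _ _ [::] _ uN (erefl _)).
apply: eq_card => f; rewrite !inE; apply: is_history_ext => k.
rewrite /hs; case: insubP => [i Hi Hv|Hn].
  rewrite Hi (nth_map i) ?size_enum_ord -?Hv ?ltn_ord //.
  by congr (nth _ _ (f _)); apply: val_inj; rewrite /= nth_enum_ord -?Hv ?ltn_ord.
by rewrite (negbTE Hn).
Qed.

Definition fs m := nseq m false.

Lemma prefix_fs a b : prefix (fs a) (fs b) = (a <= b).
Proof. by elim: a b => [|a IH] [|b] //=; rewrite IH. Qed.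

Lemma prefix_fs_cat m d x : m <= d -> prefix (fs m) (fs d ++ x).
Proof. rewrite /fs; elim: m d => [|m IH] [|d] //= H; [exact: prefix0s|exact: IH]. Qed.

Lemma fs_catS d x : fs d ++ false :: x = fs d.+1 ++ x.
Proof. by elim: d => //= d ->. Qed.

Lemma prefix_fork u d a b :
  prefix u (fs d ++ true :: a) -> prefix u (fs d ++ false :: b) ->
  exists2 m, m <= d & u = fs m.
Proof.
rewrite /fs; elim: d u => [|d IH] [|c u] /=; try by exists 0.
- by case: c.
- case: c => //= H1 H2.
  have [m Hm ->] := IH _ H1 H2; by exists m.+1.
Qed.

Lemma prefix_cherry u d :
  prefix u (fs d ++ [:: true; false]) -> prefix u (fs d ++ [:: true; true]) ->
  u = rcons (fs d) true \/ exists2 m, m <= d & u = fs m.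
Proof.
rewrite /fs; elim: d u => [|d IH] [|c u] /=; try by right; exists 0.
- case: c => //; case: u => [|c u] /=; first by left.
  by case: c => //; case: u.
- case: c => //= H1 H2.
  have [->|[m Hm ->]] := IH _ H1 H2; first by left.
  by right; exists m.+1.
Qed.

Lemma prefix_rcons_fs m d : m <= d -> prefix (fs m) (rcons (fs d) true).
Proof. by move=> H; rewrite -cats1 prefix_fs_cat. Qed.

Lemma prefix_rcons_cherry d b : prefix (rcons (fs d) true) (fs d ++ [:: true; b]).
Proof. by rewrite -cats1 -[[:: true; b]]/([:: true] ++ [:: b]) catA prefix_prefix. Qed.

Lemma int_S n : internals (lodgepole n.+1) =
  [::] :: [seq false :: k | k <- internals (lodgepole n)] ++ [:: [:: true]].
Proof. by []. Qed.

Lemma leaves_S n : leaves (lodgepole n.+1) =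
  [seq false :: k | k <- leaves (lodgepole n)] ++ [:: [:: true; false]; [:: true; true]].
Proof. by []. Qed.

Lemma nodes_S n : nodes (lodgepole n.+1) =
  [::] :: [seq false :: k | k <- nodes (lodgepole n)] ++
  [:: [:: true]; [:: true; false]; [:: true; true]].
Proof. by []. Qed.

Lemma int_case n k : k \in internals (lodgepole n.+1) ->
  [\/ k = [::], k = [:: true] | exists2 k', k' \in internals (lodgepole n) & k = false :: k'].
Proof.
rewrite int_S inE mem_cat => /orP[/eqP->|/orP[/mapP[k' Hk ->]|]]; first by constructor 1.
  by constructor 3; exists k'.
by rewrite inE => /eqP->; constructor 2.
Qed.

Lemma leaves_case n x : x \in leaves (lodgepole n.+1) ->
  [\/ x = [:: true; false], x = [:: true; true] |
      exists2 x', x' \in leaves (lodgepole n) & x = false :: x'].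
Proof.
rewrite leaves_S mem_cat => /orP[/mapP[x' Hx ->]|]; first by constructor 3; exists x'.
by rewrite !inE => /orP[]/eqP->; [constructor 1|constructor 2].
Qed.

Lemma fs_leaf n : fs n \in leaves (lodgepole n).
Proof. elim: n => [|n IH] //; by rewrite leaves_S mem_cat (map_f (cons false) IH). Qed.

Lemma fs_node m N : m <= N -> fs m \in nodes (lodgepole N).
Proof.
elim: N m => [|N IH] [|m] //= H; rewrite ?inE //.
by rewrite mem_cat map_f ?orbT // IH.
Qed.

Lemma cherry_node d N : d < N -> rcons (fs d) true \in nodes (lodgepole N).
Proof.
elim: N d => [|N IH] [|d] //= H.
- by rewrite inE mem_cat !inE eqxx !orbT.
- by rewrite inE mem_cat map_f ?orbT // IH.
Qed.

Lemma nodes_uniq t : uniq (nodes t).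
Proof.
elim: t => [|l IHl r IHr] //=.
rewrite cat_uniq !map_inj_uniq // ?IHl ?IHr; try by move=> ? ? [].
rewrite mem_cat andbT /=; apply/andP; split.
  by rewrite negb_or; apply/andP; split; apply/negP => /mapP[].
by apply/hasP => -[x /mapP[y _ ->] /mapP[z _]].
Qed.


Lemma int_rec n k : k \in internals (lodgepole n) -> false :: k \in internals (lodgepole n.+1).
Proof. by move=> H; rewrite int_S inE mem_cat map_f. Qed.

Lemma leaf_rec n x : x \in leaves (lodgepole n) -> false :: x \in leaves (lodgepole n.+1).
Proof. by move=> H; rewrite leaves_S mem_cat map_f. Qed.

Fixpoint ok (n d lo : nat) (h : seq bool -> seq bool) : bool :=
  if n is n'.+1 then
    has (fun i => [&& h [::] == fs (d - i),
                     (h [:: true] == rcons (fs d) true) ||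
                       has (fun i' => h [:: true] == fs (d - i')) (iota 0 i.+1)
                   & ok n' d.+1 (d - i) (fun k => h (false :: k))])
        (iota 0 (d.+1 - lo))
  else true.

Lemma okS n d lo h : ok n.+1 d lo h =
    has (fun i => [&& h [::] == fs (d - i),
                     (h [:: true] == rcons (fs d) true) ||
                       has (fun i' => h [:: true] == fs (d - i')) (iota 0 i.+1)
                   & ok n d.+1 (d - i) (fun k => h (false :: k))])
        (iota 0 (d.+1 - lo)).
Proof. by []. Qed.

Definition Cond n d lo (h : seq bool -> seq bool) :=
  [/\ {in internals (lodgepole n), forall k, h k \in nodes (lodgepole (n + d))},
      {in internals (lodgepole n), forall k, {in leaves (lodgepole n), forall x,
          prefix k x -> prefix (h k) (fs d ++ x)}},
      {in internals (lodgepole n) &, forall k1 k2, prefix k1 k2 -> prefix (h k1) (h k2)} &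
      {in internals (lodgepole n), forall k, prefix (fs lo) (h k)}].

Lemma ok_sound n : forall d lo h, lo <= d -> ok n d lo h -> Cond n d lo h.
Proof.
elim: n => [|n IH] d lo h Hlo; first by split.
rewrite okS => /hasP [i]; rewrite mem_iota add0n => /andP[_ Hi] /and3P [/eqP Hr Hc Hrec].
set m := d - i in Hr Hrec.
have Hmd : m <= d by rewrite /m leq_subr.
have Hlom : lo <= m by rewrite /m; lia.
have [C0 C1 C2 C3] := IH _ _ _ (leq_trans Hmd (leqnSn d)) Hrec.
have Hz : h [:: true] = rcons (fs d) true \/ exists2 m', m <= m' <= d & h [:: true] = fs m'.
  case/orP: Hc => [/eqP ->|Hc]; first by left.
  case/hasP: Hc => i' Hi' /eqP ->.
  by right; exists (d - i') => //; move: Hi'; rewrite mem_iota /m; lia.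
have E : n + d.+1 = n.+1 + d by rewrite addnS addSn.
split.
- move=> k /int_case [->|->|[k' Hk' ->]].
  + by rewrite Hr fs_node //; lia.
  + case: Hz => [->|[m' /andP[_ Hm'] ->]]; first by rewrite cherry_node //; lia.
    by rewrite fs_node //; lia.
  + by rewrite -E; apply: C0.
- move=> k /int_case [->|->|[k' Hk' ->]] x /leaves_case [->|->|[x' Hx' ->]] Hp //;
    try by rewrite Hr prefix_fs_cat.
  + case: Hz => [->|[m' /andP[_ Hm'] ->]]; [exact: prefix_rcons_cherry| exact: prefix_fs_cat].
  + case: Hz => [->|[m' /andP[_ Hm'] ->]]; [exact: prefix_rcons_cherry| exact: prefix_fs_cat].
  + by rewrite fs_catS; apply: C1.
- move=> k1 k2 /int_case [->|->|[k1' H1 ->]] /int_case [->|->|[k2' H2 ->]] Hp //;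
    try exact: prefix_refl.
  + rewrite Hr; case: Hz => [->|[m' /andP[Hm' _] ->]]; first exact: prefix_rcons_fs.
    by rewrite prefix_fs.
  + by rewrite Hr; apply: C3.
  + by apply: C2.
- move=> k /int_case [->|->|[k' Hk' ->]].
  + by rewrite Hr prefix_fs.
  + case: Hz => [->|[m' /andP[Hm' _] ->]]; first by apply: prefix_rcons_fs.
    by rewrite prefix_fs; lia.
  + by apply: prefix_trans (C3 _ Hk'); rewrite prefix_fs.
Qed.

Lemma ok_complete n : forall d lo h, Cond n d lo h -> ok n d lo h.
Proof.
elim: n => [|n IH] d lo h // [C0 C1 C2 C3]; rewrite okS.
have Hl1 : false :: fs n \in leaves (lodgepole n.+1) by apply: leaf_rec; apply: fs_leaf.
have Hl2 : [:: true; false] \in leaves (lodgepole n.+1)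
  by rewrite leaves_S mem_cat !inE eqxx orbT.
have Hl3 : [:: true; true] \in leaves (lodgepole n.+1)
  by rewrite leaves_S mem_cat !inE eqxx !orbT.
have Hr0 : [::] \in internals (lodgepole n.+1) by rewrite int_S inE eqxx.
have Hc0 : [:: true] \in internals (lodgepole n.+1)
  by rewrite int_S inE mem_cat !inE eqxx !orbT.
have [m Hmd Hr] := prefix_fork (C1 _ Hr0 _ Hl2 (prefix0s _)) (C1 _ Hr0 _ Hl1 (prefix0s _)).
have Hlom : lo <= m by rewrite -prefix_fs -Hr; apply: C3.
have Hz := prefix_cherry (C1 _ Hc0 _ Hl2 isT) (C1 _ Hc0 _ Hl3 isT).
apply/hasP; exists (d - m); first by rewrite mem_iota; lia.
rewrite subKn // Hr eqxx andTb; apply/andP; split.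
- case: Hz => [->|[m' Hm' Hc]]; first by rewrite eqxx.
  have Hmm : m <= m' by rewrite -prefix_fs -Hr -Hc; apply: C2.
  apply/orP; right; apply/hasP; exists (d - m'); first by rewrite mem_iota; lia.
  by rewrite subKn // Hc.
- apply: IH; split.
  + by move=> k Hk; rewrite addnS -addSn; apply: C0; apply: int_rec.
  + move=> k Hk x Hx Hp; rewrite -fs_catS; apply: (C1 _ (int_rec Hk) _ (leaf_rec Hx)).
    by rewrite prefix_cons eqxx.
  + move=> k1 k2 H1 H2 Hp; apply: (C2 _ _ (int_rec H1) (int_rec H2)).
    by rewrite prefix_cons eqxx.
  + by move=> k Hk; rewrite -Hr; apply: C2 => //; apply: int_rec.
Qed.

Lemma hist_ok n h : is_history (lodgepole n) h = ok n 0 0 h.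
Proof.
apply/idP/idP.
- move=> /andP[/andP[/allP H0 /allP H1] /allP H2]; apply: ok_complete; split.
  + by move=> k Hk; rewrite addn0; apply: H0.
  + move=> k Hk x Hx Hp; have := allP (H1 k Hk) x Hx.
    by rewrite /below Hp.
  + move=> k1 k2 Hk1 Hk2 Hp; have := allP (H2 k1 Hk1) k2 Hk2.
    by rewrite /below Hp.
  + by move=> k _; apply: prefix0s.
- move=> /(ok_sound (leqnn 0)) [H0 H1 H2 _].
  rewrite /is_history; apply/andP; split; first apply/andP; first split.
  + by apply/allP => k Hk; rewrite -(addn0 n); apply: H0.
  + apply/allP => k Hk; apply/allP => x Hx; apply/implyP => Hp.
    exact: (H1 k Hk x Hx Hp).
  + apply/allP => k Hk; apply/allP => x Hx; apply/implyP => Hp.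
    exact: (H2 k x Hk Hx Hp).
Qed.

Fixpoint HH n j := if n is n'.+1 then \sum_(i < j.+1) (i + 2) * HH n' i.+1 else 1.

Lemma size_int n : size (internals (lodgepole n)) = n.*2.
Proof. by elim: n => // n IH; rewrite int_S /= size_cat size_map IH /= addn1 doubleS. Qed.

Lemma int_uniq n : uniq (internals (lodgepole n)).
Proof.
elim: n => // n IH; rewrite int_S cons_uniq cat_uniq map_inj_uniq //; last by move=> ? ? [].
have H1 : [::] \notin [seq false :: k | k <- internals (lodgepole n)].
  by apply/negP; case/mapP.
have H2 : [:: true] \notin [seq false :: k | k <- internals (lodgepole n)].
  by apply/negP; case/mapP.
by rewrite mem_cat negb_or H1 IH /= orbF andbT; apply: H2.
Qed.

Lemma ok_ext n : forall d lo h1 h2, {in internals (lodgepole n), h1 =1 h2} ->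
  ok n d lo h1 = ok n d lo h2.
Proof.
elim: n => // n IH d lo h1 h2 E; rewrite !okS.
have Hr0 : [::] \in internals (lodgepole n.+1) by rewrite int_S inE eqxx.
have Hc0 : [:: true] \in internals (lodgepole n.+1)
  by rewrite int_S inE mem_cat !inE eqxx !orbT.
apply: eq_has => i; rewrite !E //; congr (_ && (_ && _)).
by apply: IH => k Hk; apply: E; apply: int_rec.
Qed.

Section HS.
Variables (n : nat) (x z : seq bool) (u : seq (seq bool)).
Hypothesis Hu : size u = size (internals (lodgepole n)).
Let I := internals (lodgepole n).
Let s := x :: u ++ [:: z].

Lemma hs_root : hs (internals (lodgepole n.+1)) s [::] = x.
Proof. by rewrite /hs int_S /=. Qed.

Lemma hs_cherry : hs (internals (lodgepole n.+1)) s [:: true] = z.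
Proof.
rewrite /hs int_S /= index_cat.
have -> : ([:: true] \in [seq false :: k | k <- I]) = false.
  by apply/negbTE/negP; case/mapP.
rewrite /= addn0 size_cat /= size_map ltnS addn1 ltnSn.
by rewrite nth_cat -Hu ltnn subnn.
Qed.

Lemma hs_rec k : k \in I -> hs (internals (lodgepole n.+1)) s (false :: k) = hs I u k.
Proof.
move=> Hk; rewrite /hs int_S /= index_cat (mem_map (fun a b (E : false :: a = false :: b) => let: erefl := E in erefl)) Hk.
rewrite index_map; last by move=> ? ? [].
have Hi : index k I < size I by rewrite index_mem.
rewrite Hi ltnS size_cat size_map ltn_addr //.
by rewrite nth_cat Hu Hi.
Qed.
End HS.

Lemma count3 (T : eqType) (P : pred (seq T)) k L :
  count P (allseq k.+2 L) =
  \sum_(x <- L) \sum_(u <- allseq k L) \sum_(z <- L) P (x :: u ++ [:: z]).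
Proof.
rewrite count_allseqS; apply: eq_bigr => x _.
rewrite -[k.+1]addn1 count_allseq_cat; apply: eq_bigr => u _.
rewrite count_allseqS; apply: eq_bigr => z _ /=; by rewrite addn0.
Qed.

Lemma has_sum (r : seq nat) (p : pred nat) : uniq r ->
  {in r &, forall i j, p i -> p j -> i = j} -> (has p r : nat) = \sum_(i <- r) p i.
Proof.
elim: r => [|a r IH] /=; first by rewrite big_nil.
move=> /andP[Ha Hu] E; rewrite big_cons.
have E' : {in r &, forall i j, p i -> p j -> i = j}.
  by move=> i j Hi Hj; apply: E; rewrite inE ?Hi ?Hj orbT.
case Hp: (p a) => /=; last by rewrite IH.
have Hn : has p r = false.
  apply/negbTE/hasP => -[j Hj Hpj].
  have Hj' : j \in a :: r by rewrite inE Hj orbT.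
  have Eaj := E a j (mem_head _ _) Hj' Hp Hpj.
  by move: Ha; rewrite Eaj Hj.
by rewrite -IH // Hn.
Qed.

Lemma sum_count (T : Type) (s : seq T) (p : pred T) : \sum_(x <- s) (p x : nat) = count p s.
Proof. by rewrite -sumn_count sumnE big_map. Qed.

Lemma sum_prod3 (T1 T2 : Type) (X Z : seq T1) (U : seq T2) (R : seq nat)
  (A B : nat -> T1 -> nat) (C : nat -> T2 -> nat) :
  \sum_(x <- X) \sum_(u <- U) \sum_(z <- Z) \sum_(i <- R) (A i x * (B i z * C i u)) =
  \sum_(i <- R) ((\sum_(x <- X) A i x) * ((\sum_(z <- Z) B i z) * (\sum_(u <- U) C i u))).
Proof.
under eq_bigr do under eq_bigr do rewrite exchange_big.
under eq_bigr do rewrite exchange_big.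
rewrite exchange_big; apply: eq_bigr => i _.
rewrite big_distrl; apply: eq_bigr => x _ /=.
transitivity (A i x * \sum_(u <- U) \sum_(z <- Z) (B i z * C i u)).
  by rewrite big_distrr /=; apply: eq_bigr => u _; rewrite big_distrr.
congr (_ * _); rewrite [RHS]big_distrr /=; apply: eq_bigr => u _.
by rewrite big_distrl.
Qed.

Lemma count_mem_sub (T : eqType) (S L : seq T) :
  uniq S -> uniq L -> {subset S <= L} -> count (mem S) L = size S.
Proof.
move=> uS uL sub; rewrite -size_filter; apply/perm_size/uniq_perm => //.
  exact: filter_uniq.
move=> y; rewrite mem_filter; apply/andP/idP => [[]//|Hy]; split => //; exact: sub.
Qed.

Definition zc d i (z : seq bool) :=
  (z == rcons (fs d) true) || has (fun i' => z == fs (d - i')) (iota 0 i.+1).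

Lemma size_fs m : size (fs m) = m. Proof. exact: size_nseq. Qed.

Lemma count_zc N d i : i <= d -> d < N -> count (zc d i) (nodes (lodgepole N)) = i + 2.
Proof.
move=> Hid HdN.
pose S := rcons (fs d) true :: [seq fs (d - i') | i' <- iota 0 i.+1].
have -> : count (zc d i) (nodes (lodgepole N)) = count (mem S) (nodes (lodgepole N)).
  apply: eq_count => z /=; rewrite /zc in_cons; congr (_ || _).
  apply/hasP/mapP => -[i' Hi' E]; exists i' => //; exact/eqP.
rewrite count_mem_sub ?nodes_uniq //.
- by rewrite /S /= size_map size_iota addn2.
- rewrite /S cons_uniq; apply/andP; split.
  + apply/negP => /mapP [i' _ E].
    have : true \in rcons (fs d) true by rewrite mem_rcons mem_head.
    by rewrite E /fs mem_nseq andbF.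
  + rewrite map_inj_in_uniq ?iota_uniq // => a b; rewrite !mem_iota => Ha Hb E.
    have := congr1 size E; rewrite !size_fs; lia.
- move=> y; rewrite /S inE => /orP[/eqP ->|/mapP [i' _ ->]].
  + exact: cherry_node.
  + apply: fs_node; lia.
Qed.

Lemma count_ok N n : forall d lo, lo <= d -> n + d <= N ->
  count (fun s => ok n d lo (hs (internals (lodgepole n)) s))
        (allseq n.*2 (nodes (lodgepole N))) = HH n (d - lo).
Proof.
set L := nodes (lodgepole N).
elim: n => [|n IH] d lo Hlo HN; first by [].
set I := internals (lodgepole n).
rewrite doubleS count3.
transitivity (\sum_(x <- L) \sum_(u <- allseq n.*2 L) \sum_(z <- L)
   \sum_(i <- iota 0 (d.+1 - lo))
      ((x == fs (d - i)) * (zc d i z * ok n d.+1 (d - i) (hs I u)))).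
  apply: eq_bigr => x _; apply: eq_big_seq => u; rewrite mem_allseq => /andP[/eqP Hu _].
  have Hu' : size u = size I by rewrite Hu size_int.
  apply: eq_bigr => z _.
  rewrite okS hs_root hs_cherry //.
  have E : forall i, ok n d.+1 (d - i)
            (fun k => hs (internals (lodgepole n.+1)) (x :: u ++ [:: z]) (false :: k))
          = ok n d.+1 (d - i) (hs I u).
    by move=> i; apply: ok_ext => k Hk; apply: hs_rec.
  rewrite (@eq_has _ _ (fun i => [&& x == fs (d - i), zc d i z & ok n d.+1 (d - i) (hs I u)]));
    last by move=> i; rewrite E.
  rewrite has_sum ?iota_uniq //.
    by apply: eq_bigr => i _; rewrite -!mulnb.
  move=> a b; rewrite !mem_iota => Ha Hb /andP[/eqP Ea _] /andP[/eqP Eb _].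
  have := congr1 size (etrans (esym Ea) Eb); rewrite !size_fs; lia.
rewrite sum_prod3.
have -> : iota 0 (d.+1 - lo) = index_iota 0 (d - lo).+1 by rewrite /index_iota subn0 subSn.
rewrite big_mkord /=; apply: eq_bigr => i _.
have Hi : i <= d by have := ltn_ord i; lia.
rewrite !sum_count count_uniq_mem ?nodes_uniq // fs_node; last by lia.
rewrite count_zc //; last by lia.
rewrite (IH d.+1 (d - i)) //; last by lia.
  by rewrite mul1n subSn ?leq_subr // subKn.
by lia.
Qed.

Theorem hist_HH n : num_histories (lodgepole n) = HH n 0.
Proof.
rewrite num_histories_count ?nodes_uniq // size_int.
rewrite -(count_ok (N := n) (leqnn 0)) ?addn0 //.
by apply: eq_count => s; rewrite hist_ok.
Qed.

Fixpoint GG n j := if n is n'.+1 then \sum_(x < j.+2) (x + 1) * GG n' x else 1.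

Lemma bump0 i : bump 0 i = i.+1. Proof. by []. Qed.

Lemma GG_dec n j : GG n j = HH n j + \sum_(k < n) HH k j * GG (n.-1 - k) 0.
Proof.
elim: n j => [|n IH] j; first by rewrite big_ord0 addn0.
rewrite /= big_ord_recl /= mul1n.
under eq_bigr => x _ do rewrite IH mulnDr.
rewrite big_split /= [\sum_(k < n.+1) _]big_ord_recl /= ?subn0 ?mul1n.
have -> : \sum_(i < j.+1) (bump 0 i + 1) * HH n (bump 0 i) =
          \sum_(i < j.+1) (i + 2) * HH n i.+1.
  by apply: eq_bigr => i _; rewrite bump0 addn1 addn2.
have -> : \sum_(i < j.+1) (bump 0 i + 1) *
      \sum_(k < n) HH k (bump 0 i) * GG (n.-1 - k) 0
   = \sum_(k < n) HH (bump 0 k) j * GG (n - bump 0 k) 0.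
  under eq_bigr => i _ do rewrite big_distrr.
  rewrite exchange_big /=; apply: eq_bigr => k _.
  rewrite bump0 /= big_distrl /=; apply: eq_bigr => i _.
  have -> : n.-1 - k = n - k.+1 by lia.
  rewrite bump0 add0n mulnA; congr (_ * _ * _); lia.
by rewrite addnCA.
Qed.

Lemma hockey a M : \sum_(x < M.+1) 'C(a + x, x) = 'C(a + M.+1, M).
Proof.
elim: M => [|M IH]; first by rewrite big_ord1 !bin0.
by rewrite big_ord_recr /= IH [in RHS]addnS binS addnC.
Qed.

Lemma dfact_odd n : dfact (n.+1).*2.+1 = (n.*2).+3 * dfact n.*2.+1.
Proof. by rewrite doubleS. Qed.

Lemma dfact_even n : dfact (n.*2).+1 = (n.*2).+1 * dfact (n.*2).-1.
Proof. by case: n => // n; rewrite doubleS /= mul1n. Qed.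

Lemma GG_closed n j : GG n j = 'C(n.*2 + j.+1, j.+1) * dfact (n.*2).-1.
Proof.
elim: n j => [|n IH] j; first by rewrite add0n binn.
have E : dfact (n.+1).*2.-1 = n.*2.+1 * dfact (n.*2).-1.
  by rewrite doubleS -dfact_even.
rewrite E /=.
under eq_bigr => x _ do rewrite IH mulnA addn1 mul_bin_left.
have -> : \sum_(i < j.+2) (n.*2 + i.+1 - i) * 'C(n.*2 + i.+1, i) * dfact (n.*2).-1 =
          \sum_(i < j.+2) 'C(n.*2.+1 + i, i) * ((n.*2).+1 * dfact (n.*2).-1).
  apply: eq_bigr => i _; have -> : n.*2 + i.+1 - i = n.*2.+1 by lia.
  have -> : n.*2 + i.+1 = n.*2.+1 + i by lia.
  by rewrite [_ * 'C(_, _)]mulnC -mulnA.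
rewrite -big_distrl hockey.
by congr (_ * _); congr 'C(_, _); lia.
Qed.

Definition Dd n := dfact n.*2.+1.
Arguments Dd : simpl never.
Lemma D0 : Dd 0 = 1. Proof. by []. Qed.

Lemma DS n : Dd n.+1 = (n.*2).+3 * Dd n.
Proof. exact: dfact_odd. Qed.

Lemma D_pos n : 0 < Dd n.
Proof. by elim: n => // n IH; rewrite DS muln_gt0. Qed.

Lemma GG0 n : GG n 0 = Dd n.
Proof.
by rewrite GG_closed bin1 /Dd dfact_even addn1.
Qed.

Lemma HH_le_GG n j : HH n j <= GG n j.
Proof. by rewrite GG_dec leq_addr. Qed.

Lemma h_le_D n : HH n 0 <= Dd n.
Proof. by rewrite -GG0 HH_le_GG. Qed.

Lemma D_mul a b : 0 < a -> 0 < b -> Dd a * Dd b <= 3 * Dd (a + b).-1.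
Proof.
move=> Ha; elim: b => // b IH _.
case: b IH => [|b] IH.
  by rewrite addn1 /= mulnC /Dd /= muln1.
have e1 : (a + b.+2).-1 = (a + b).+1 by lia.
have e2 : (a + b.+1).-1 = a + b by lia.
have IH' := IH isT; rewrite e2 in IH'.
rewrite e1 !DS mulnCA (leq_trans (leq_mul (leqnn _) IH')) //.
rewrite mulnCA leq_mul2l /=; apply: leq_mul => //.
rewrite doubleS !ltnS; lia.
Qed.

Lemma sumD_le M : \sum_(k < M.+2) Dd k * Dd (M.+1 - k) <= 5 * Dd M.+1.
Proof.
rewrite big_ord_recl big_ord_recr /= ?subn0 ?subnn D0 muln1 mul1n.
have Hmid : \sum_(i < M) Dd (bump 0 i) * Dd (M.+1 - bump 0 i) <= M * (3 * Dd M).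
  rewrite -[M in M * _]card_ord -sum_nat_const; apply: leq_sum => i _.
  rewrite bump0 subSS.
  apply: leq_trans (D_mul _ _) _ => //; first by rewrite subn_gt0.
  have -> : (i.+1 + (M - i)).-1 = M by have := ltn_ord i; lia.
  by [].
have HD : M * (3 * Dd M) <= 3 * Dd M.+1.
  by rewrite mulnCA leq_mul2l /= DS leq_mul2r; apply/orP; right; lia.
rewrite [bump 0 M]bump0.
apply: leq_trans (leq_add (leqnn _) (leq_add (leq_trans Hmid HD) (leqnn _))) _; lia.
Qed.

Lemma D_le_h M : Dd M.+1 <= HH M.+1 0 + 5 * Dd M.
Proof.
rewrite -[Dd M.+1]GG0 GG_dec leq_add2l.
have H1 : \sum_(k < M.+1) HH k 0 * GG (M.+1.-1 - k) 0 <= \sum_(k < M.+1) Dd k * Dd (M - k).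
  by apply: leq_sum => k _; rewrite GG0 leq_mul2r h_le_D orbT.
apply: leq_trans H1 _.
case: M => [|M]; first by rewrite big_ord1 D0.
exact: sumD_le.
Qed.

Lemma fact_le_D n : n`! <= Dd n.
Proof.
elim: n => // n IH; rewrite factS DS; apply: leq_mul => //; lia.
Qed.

Lemma D_fact n : Dd n * 2 ^ n.+1 * n.+1`! = (n.+1).*2`!.
Proof.
elim: n => // n IH.
have E1 : (n.+2)`! = n.+2 * (n.+1)`! by rewrite factS.
have E2 : ((n.+2).*2)`! = (n.*2).+4 * ((n.*2).+3 * ((n.+1).*2)`!).
  by rewrite [(n.+2).*2]doubleS !factS doubleS.
rewrite DS E1 E2 expnS -IH.
set A := (n.+1)`!; set P := 2 ^ n.+1; set Q := Dd n.
rewrite !mulnA; congr (_ * _ * _); lia.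
Qed.

From Stdlib Require Import Reals Lra.
From Coquelicot Require Import Coquelicot.
Open Scope R_scope.

Lemma fact_eq n : Factorial.fact n = (n`!)%nat.
Proof. by elim: n => // n IH; rewrite factS /= IH. Qed.

Lemma pow_eq n : Nat.pow 2 n = expn 2 n.
Proof. by elim: n => // n IH; rewrite expnS /= IH. Qed.

Lemma Dn_eq n : dfact (2 * n + 1)%nat = Dd n.
Proof. by rewrite /Dd -mul2n addn1. Qed.

Lemma leq_INR a b : (a <= b)%nat -> (INR a <= INR b)%R.
Proof. by move=> /leP H; apply: le_INR. Qed.


Lemma F1 n : INR (num_histories (lodgepole n)) <= INR (dfact (2 * n + 1)).
Proof. by rewrite hist_HH Dn_eq; apply: leq_INR; apply: h_le_D. Qed.

Lemma F2 n : INR (dfact (2 * n.+1 + 1)) <=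
   INR (num_histories (lodgepole n.+1)) + 5 * INR (dfact (2 * n + 1)).
Proof.
rewrite !Dn_eq hist_HH.
have := leq_INR (D_le_h n); rewrite -plusE -multE plus_INR mult_INR.
by rewrite [INR 5]/= ; lra.
Qed.

Lemma F3 n : INR (dfact (2 * n.+1 + 1)) = (2 * INR n + 3) * INR (dfact (2 * n + 1)).
Proof.
rewrite !Dn_eq DS -multE mult_INR; congr (_ * _).
rewrite -addn3 -mul2n -plusE -multE plus_INR mult_INR /=; lra.
Qed.

Lemma F4 n : 0 < INR (dfact (2 * n + 1)).
Proof. rewrite Dn_eq; apply: lt_0_INR; apply/ltP; exact: D_pos. Qed.

Lemma F5 n : INR (Factorial.fact n) <= INR (dfact (2 * n + 1)).
Proof. by rewrite Dn_eq fact_eq; apply: leq_INR; apply: fact_le_D. Qed.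

Lemma F6 n : INR (dfact (2 * n + 1)) * 2 ^ n.+1 * INR (Factorial.fact n.+1) =
             INR (Factorial.fact (2 * n + 2)).
Proof.
rewrite Dn_eq !fact_eq -[2 ^ n.+1]/(INR 2 ^ n.+1) -pow_INR -!mult_INR pow_eq !multE D_fact.
by congr (INR (_ `!)); lia.
Qed.

Lemma ln_lower x : 0 < x -> x - x ^ 2 / 2 <= ln (1 + x).
Proof.
move=> Hx.
pose f y := ln (1 + y) - (y - y ^ 2 / 2).
have Hd : forall y, 0 <= y -> is_derive f y (y ^ 2 / (1 + y)).
  move=> y Hy; rewrite /f; auto_derive; first lra.
  field; lra.
have H1 : forall y, Rmin 0 x < y < Rmax 0 x -> is_derive f y (y ^ 2 / (1 + y)).
  move=> y; rewrite Rmin_left ?Rmax_right; try lra; move=> Hy; apply: Hd; lra.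
have H2 : forall y, Rmin 0 x <= y <= Rmax 0 x -> continuity_pt f y.
  move=> y; rewrite Rmin_left ?Rmax_right; try lra; move=> Hy.
  apply/continuity_pt_filterlim; apply: ex_derive_continuous.
  eexists; apply: Hd; lra.
have [c [Hc E]] := MVT_gen f 0 x (fun y => y ^ 2 / (1 + y)) H1 H2.
  move: Hc; rewrite Rmin_left ?Rmax_right; try lra; move=> Hc.
  have : 0 <= c ^ 2 / (1 + c) * (x - 0).
    apply: Rmult_le_pos; last lra.
    apply: Rmult_le_pos; [apply: pow2_ge_0 | apply: Rlt_le; apply: Rinv_0_lt_compat; lra].
  rewrite -E /f Rplus_0_r ln_1; lra.
Qed.

Lemma ln_upper x : 0 < x -> ln (1 + x) <= x - x ^ 2 / 2 + x ^ 3 / 3.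
Proof.
move=> Hx.
pose f y := (y - y ^ 2 / 2 + y ^ 3 / 3) - ln (1 + y).
have Hd : forall y, 0 <= y -> is_derive f y (y ^ 3 / (1 + y)).
  move=> y Hy; rewrite /f; auto_derive; first lra.
  field; lra.
have H1 : forall y, Rmin 0 x < y < Rmax 0 x -> is_derive f y (y ^ 3 / (1 + y)).
  move=> y; rewrite Rmin_left ?Rmax_right; try lra; move=> Hy; apply: Hd; lra.
have H2 : forall y, Rmin 0 x <= y <= Rmax 0 x -> continuity_pt f y.
  move=> y; rewrite Rmin_left ?Rmax_right; try lra; move=> Hy.
  apply/continuity_pt_filterlim; apply: ex_derive_continuous.
  eexists; apply: Hd; lra.
have [c [Hc E]] := MVT_gen f 0 x (fun y => y ^ 3 / (1 + y)) H1 H2.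
  move: Hc; rewrite Rmin_left ?Rmax_right; try lra; move=> Hc.
  have : 0 <= c ^ 3 / (1 + c) * (x - 0).
    apply: Rmult_le_pos; last lra.
    apply: Rmult_le_pos; [apply: pow_le; lra | apply: Rlt_le; apply: Rinv_0_lt_compat; lra].
  rewrite -E /f Rplus_0_r ln_1; lra.
Qed.

Definition t (m : nat) : R := ln (INR (Factorial.fact m)) + INR m - (INR m + /2) * ln (INR m).

Lemma INR_gt0 m : (0 < m)%nat -> 0 < INR m.
Proof. by move=> /ltP H; apply: lt_0_INR. Qed.

Lemma t_step m : (0 < m)%nat -> t m - t m.+1 = (INR m + /2) * ln (1 + / INR m) - 1.
Proof.
move=> Hm; have Hm' := INR_gt0 Hm.
rewrite /t -[Factorial.fact m.+1]/(m.+1 * Factorial.fact m)%coq_nat mult_INR S_INR.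
rewrite ln_mult; [|lra|apply: INR_fact_lt_0].
have -> : 1 + / INR m = (INR m + 1) / INR m by field; lra.
rewrite ln_div; [|lra|lra].
ring.
Qed.

Lemma t_step_bound m : (0 < m)%nat -> Rabs (t m - t m.+1) <= / INR m ^ 2.
Proof.
move=> Hm; have Hm' := INR_gt0 Hm.
have Hm1 : 1 <= INR m by have := le_INR 1 m; move/leP: Hm => H; apply.
rewrite t_step //.
set x := / INR m.
have Hx : 0 < x by apply: Rinv_0_lt_compat.
have Hx1 : x <= 1 by rewrite /x -Rinv_1; apply: Rinv_le_contravar; lra.
have Hx2 : / INR m ^ 2 = x ^ 2 by rewrite /x; field; lra.
rewrite Hx2.
have L := ln_lower Hx; have U := ln_upper Hx.
have A1 : (INR m + /2) * (x - x ^ 2 / 2) = 1 - x ^ 2 / 4 by rewrite /x; field; lra.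
have A2 : (INR m + /2) * (x - x ^ 2 / 2 + x ^ 3 / 3) = 1 + x ^ 2 / 12 + x ^ 3 / 6
  by rewrite /x; field; lra.
have P : 0 <= INR m + /2 by lra.
have B1 := Rmult_le_compat_l _ _ _ P L.
have B2 := Rmult_le_compat_l _ _ _ P U.
have C : x ^ 3 <= x ^ 2.
  have -> : x ^ 3 = x ^ 2 * x by ring.
  have : 0 <= x ^ 2 by apply: pow2_ge_0.
  nra.
have D2 : 0 <= x ^ 2 by apply: pow2_ge_0.
apply: Rabs_le; split; lra.
Qed.

Lemma t_diff_bound N : (0 < N)%nat -> forall k,
  Rabs (t N - t (N + k)%nat) <= INR k / INR N ^ 2.
Proof.
move=> HN; have HN' := INR_gt0 HN.
elim=> [|k IH].
  rewrite addn0 Rminus_diag Rabs_R0 /=; lra.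
have -> : t N - t (N + k.+1)%nat = (t N - t (N + k)%nat) + (t (N + k)%nat - t (N + k).+1)
  by rewrite addnS; ring.
apply: Rle_trans (Rabs_triang _ _) _.
have H2 : Rabs (t (N + k)%nat - t (N + k).+1) <= / INR N ^ 2.
  apply: Rle_trans (t_step_bound _) _; first by rewrite addn_gt0 HN.
  apply: Rinv_le_contravar; first by apply: pow_lt.
  apply: pow_incr; split; first lra.
  by apply: le_INR; apply/leP; rewrite leq_addr.
rewrite S_INR.
have -> : (INR k + 1) / INR N ^ 2 = INR k / INR N ^ 2 + / INR N ^ 2 by field; lra.
lra.
Qed.

Lemma exp_t m : (0 < m)%nat ->
  exp (t m) = INR (Factorial.fact m) * exp (INR m) / (INR m ^ m * sqrt (INR m)).
Proof.
move=> Hm; have Hm' := INR_gt0 Hm.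
have E : exp ((INR m + /2) * ln (INR m)) = INR m ^ m * sqrt (INR m).
  rewrite -[exp _]/(Rpower (INR m) (INR m + /2)) Rpower_plus Rpower_pow //.
  by rewrite Rpower_sqrt.
rewrite /t /Rminus exp_plus exp_plus exp_Ropp exp_ln; last by apply: INR_fact_lt_0.
rewrite E /Rdiv; ring.
Qed.

Lemma exp_INR n : exp (INR n) = exp 1 ^ n.
Proof.
elim: n => [|n IH]; first by rewrite /= exp_0.
by rewrite S_INR exp_plus IH /=; ring.
Qed.

Lemma lim_invS : is_lim_seq (fun n => / (INR n + 1)) 0.
Proof.
have H : is_lim_seq (fun n => INR n + 1) p_infty.
  apply: (is_lim_seq_le_p_loc INR); last exact: is_lim_seq_INR.
  by exists 0%nat => n _; lra.
have := is_lim_seq_inv _ _ H; apply => //.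
Qed.

Lemma Kdiv_infty (K : R) (w : nat -> R) : 0 < K -> (forall n, 0 < w n) ->
  is_lim_seq w 0 -> is_lim_seq (fun n => K / w n) p_infty.
Proof.
move=> HK Hw Hl; apply/is_lim_seq_spec => M.
have := proj2 (is_lim_seq_spec w 0) Hl.
have Heps : 0 < K / (Rabs M + 1).
  apply: Rdiv_lt_0_compat => //; have := Rabs_pos M; lra.
move=> /(_ (mkposreal _ Heps)) [N HN]; exists N => n Hn.
have := HN n Hn; rewrite /= Rminus_0_r Rabs_pos_eq; last by apply: Rlt_le.
move=> Hlt.
have HwK : K / (K / (Rabs M + 1)) = Rabs M + 1 by field; have := Rabs_pos M; lra.
have : K / (K / (Rabs M + 1)) < K / w n.
  apply: Rmult_lt_compat_l => //; apply: Rinv_lt_contravar => //.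
  by apply: Rmult_lt_0_compat => //; apply: Hw.
rewrite HwK; have := Rle_abs M; lra.
Qed.

Notation hh n := (INR (num_histories (lodgepole n))).
Notation Dr n := (INR (dfact (2 * n + 1))).

Lemma ratio_bounds n : 1 - 5 * / (INR n + 1) <= hh n / Dr n <= 1.
Proof.
have HD := F4 n; have Hh := F1 n; have Hh0 := pos_INR (num_histories (lodgepole n)).
split; last first.
  have -> : hh n / Dr n = 1 - (Dr n - hh n) / Dr n by field; lra.
  have : 0 <= (Dr n - hh n) / Dr n by apply: Rdiv_le_0_compat; lra.
  lra.
case: n HD Hh Hh0 => [|m] HD Hh Hh0.
  have : 0 <= hh 0 / Dr 0 by apply: Rdiv_le_0_compat; lra.
  rewrite /=; lra.
have H2 := F2 m; have H3 := F3 m; have Ha := F4 m; have Hm := pos_INR m.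
rewrite S_INR.
have E : hh m.+1 / Dr m.+1 - (1 - 5 * / (INR m + 1 + 1)) =
         (hh m.+1 + 5 * Dr m - Dr m.+1) / Dr m.+1
           + 5 * (/ (INR m + 1 + 1) - Dr m / Dr m.+1).
  field; lra.
have E2 : Dr m / Dr m.+1 = / (2 * INR m + 3) by rewrite H3; field; lra.
have P1 : 0 <= (hh m.+1 + 5 * Dr m - Dr m.+1) / Dr m.+1.
  by apply: Rdiv_le_0_compat; lra.
have P2 : / (2 * INR m + 3) <= / (INR m + 1 + 1).
  by apply: Rinv_le_contravar; lra.
lra.
Qed.

Lemma part2 : is_lim_seq (fun n => hh n / Dr n) 1.
Proof.
apply: (is_lim_seq_le_le (fun n => 1 - 5 * / (INR n + 1)) _ (fun _ => 1)).
- exact: ratio_bounds.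
- have := is_lim_seq_minus' _ _ _ _ (is_lim_seq_const 1)
           (is_lim_seq_mult' _ _ _ _ (is_lim_seq_const 5) lim_invS).
  by rewrite Rmult_0_r Rminus_0_r.
- exact: is_lim_seq_const.
Qed.

Lemma part1 c : 0 < c -> is_lim_seq (fun n => hh n / c ^ (2 * n + 1)) p_infty.
Proof.
move=> Hc.
have Hpow : forall n, c ^ (2 * n + 1) = c * (c ^ 2) ^ n.
  by move=> n; rewrite pow_add pow_mult /=; ring.
pose w n := (c ^ 2) ^ n / INR (Factorial.fact n).
have Hw : forall n, 0 < w n.
  move=> n; apply: Rdiv_lt_0_compat; last exact: INR_fact_lt_0.
  apply: pow_lt; apply: pow_lt.
  done.
have Hwl : is_lim_seq w 0 by apply/is_lim_seq_Reals; apply: cv_speed_pow_fact.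
have Hv : is_lim_seq (fun n => Dr n / c ^ (2 * n + 1)) p_infty.
  apply: (is_lim_seq_le_p_loc (fun n => / c / w n)); last first.
    by apply: Kdiv_infty => //; apply: Rinv_0_lt_compat.
  exists 0%nat => n _; rewrite Hpow /w.
  have Hf := INR_fact_lt_0 n; have H5 := F5 n.
  have Hcp : 0 < (c ^ 2) ^ n by apply: pow_lt; apply: pow_lt.
  have -> : / c / ((c ^ 2) ^ n / INR (Factorial.fact n)) = INR (Factorial.fact n) / (c * (c ^ 2) ^ n)
    by field; lra.
  apply: Rmult_le_compat_r => //.
  by apply: Rlt_le; apply: Rinv_0_lt_compat; apply: Rmult_lt_0_compat.
apply: (is_lim_seq_ext (fun n => (hh n / Dr n) * (Dr n / c ^ (2 * n + 1)))).
  move=> n; have := F4 n; have : 0 < c ^ (2 * n + 1) by apply: pow_lt.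
  move=> ? ?; field; lra.
apply: (is_lim_seq_mult _ _ _ _ _ part2 Hv).
apply: is_Rbar_mult_sym; apply: is_Rbar_mult_p_infty_pos; rewrite /=; lra.
Qed.

Lemma stirling_eq n :
  Dr n / (sqrt 2 * (sqrt (INR (2 * n + 2) / exp 1)) ^ (2 * n + 2)) =
  exp (t (n.+1 + n.+1)%nat - t n.+1).
Proof.
set N := n.+1.
have HN : (0 < N)%nat by [].
have HNN : (0 < N + N)%nat by [].
have Hx := INR_gt0 HN.
have e1 : (2 * n + 2)%nat = (N + N)%nat by rewrite /N; lia.
rewrite e1 /Rminus exp_plus exp_Ropp !exp_t //.
rewrite plus_INR.
have F := F6 n; rewrite -/N e1 in F; rewrite -F.
set x := INR N in Hx *.
have Hs : sqrt ((x + x) / exp 1) ^ (N + N) = ((x + x) / exp 1) ^ N.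
  rewrite pow_add -Rpow_mult_distr sqrt_sqrt //.
  apply: Rlt_le; apply: Rdiv_lt_0_compat; [lra | apply: exp_pos].
rewrite Hs exp_plus pow_add.
have -> : x + x = 2 * x by ring.
rewrite sqrt_mult; [|lra|lra].
rewrite /Rdiv !Rpow_mult_distr pow_inv -exp_INR -/x.
have H2 : 0 < 2 ^ N by apply: pow_lt; lra.
have Hxn : 0 < x ^ N by apply: pow_lt.
have Hs2 : 0 < sqrt 2 by apply: sqrt_lt_R0; lra.
have Hsx : 0 < sqrt x by apply: sqrt_lt_R0.
have He := exp_pos x.
have Hf := INR_fact_lt_0 N.
have Hd := F4 n.
field; repeat split; lra.
Qed.

Lemma part3 :
  is_lim_seq (fun n => Dr n / (sqrt 2 * (sqrt (INR (2 * n + 2) / exp 1)) ^ (2 * n + 2))) 1.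
Proof.
apply: (is_lim_seq_ext (fun n => exp (t (n.+1 + n.+1)%nat - t n.+1))).
  by move=> n; rewrite stirling_eq.
have Hu : is_lim_seq (fun n => t (n.+1 + n.+1)%nat - t n.+1) 0.
  apply: (is_lim_seq_le_le (fun n => - / (INR n + 1)) _ (fun n => / (INR n + 1))).
  - move=> n; have := t_diff_bound (isT : (0 < n.+1)%nat) n.+1.
    rewrite Rabs_minus_sym S_INR.
    have Hx : 0 < INR n + 1 by have := pos_INR n; lra.
    have -> : (INR n + 1) / (INR n + 1) ^ 2 = / (INR n + 1) by field; lra.
    move/Rabs_le_between => H; lra.
  - have := is_lim_seq_mult' _ _ _ _ (is_lim_seq_const (-1)) lim_invS.
    rewrite Rmult_0_r; apply: is_lim_seq_ext => n; ring.
  - exact: lim_invS.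
have := is_lim_seq_continuous exp _ 0 (derivable_continuous_pt _ _ (derivable_pt_exp 0)) Hu.
by rewrite exp_0.
Qed.

Theorem corollary1 :
  (forall c : R, 0 < c ->
     is_lim_seq (fun n => INR (num_histories (lodgepole n)) / c ^ (2 * n + 1)) p_infty) /\
  is_lim_seq (fun n => INR (num_histories (lodgepole n)) / INR (dfact (2 * n + 1))) 1 /\
  is_lim_seq (fun n => INR (dfact (2 * n + 1)) /
                       (sqrt 2 * (sqrt (INR (2 * n + 2) / exp 1)) ^ (2 * n + 2))) 1.
Proof.
split; first exact: part1.
split; [exact: part2 | exact: part3].
Qed.
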